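(* Let $M_G$ be a connected mixed graph such that $N(M_G)$ has rank $2$. Then $M_G$ is switching equivalent to every connected mixed graph that is cospectral with $M_G$.
   Context: A mixed graph $M_G$ is obtained from a finite simple graph $G$ by orienting the edges of some subset of $E(G)$; it is connected if $G$ is. With $\omega=\frac{1+\mathbf{i}\sqrt3}{2}$, $N(M_G)$ has $(u,v)$-entry $\omega$ if $\overrightarrow{uv}$ is an arc, $\bar\omega$ if $\overrightarrow{vu}$ is an arc, $1$ for an undirected edge, $0$ otherwise; cospectral means the matrices $N$ have the same multiset of eigenvalues. Mixed graphs are considered up to isomorphism. $\mathbb{T}_6=\{1,-1,\omega,\bar\omega,-\omega,-\bar\omega\}$. Given a partition $V(M_G)=\bigcup_{j\in\mathbb{T}_6}V_j$ into six possibly empty sets, an edge or arc $xy$ has type $(j,k)$ if $x\in V_j,y\in V_k$ (arcs directed from $x$ to $y$). The partition is admissible if every undirected edge has type $(j,j)$ or $(j,\omega j)$, and every arc has type $(j,j)$, $(j,\bar\omega j)$ or $(j,-\omega j)$, for some $j$. A three-way switching w.r.t. an admissible partition replaces each undirected edge of type $(j,\omega j)$ by an arc from $V_j$ to $V_{\omega j}$, replaces each arc of type $(j,\bar\omega j)$ by an undirected edge, and reverses each arc of type $(j,-\omega j)$. The converse of a mixed graph reverses all arcs. Two mixed graphs are switching equivalent if one is obtained from the other by a sequence of three-way switchings and taking converses. *)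

(* Defs.v *)
From HB Require Import structures.
From mathcomp Require Import all_boot all_order all_algebra all_fingroup all_field.
From Stdlib Require Import Relations.
Set Implicit Arguments. Unset Strict Implicit. Unset Printing Implicit Defensive.
Import Order.TTheory GRing.Theory Num.Theory.
Local Open Scope ring_scope.

(* A mixed graph on vertex set 'I_n: [und u v] = undirected edge uv,
   [arc u v] = arc directed from u to v. *)
Record mixed_graph (n : nat) := MixedGraph { und : rel 'I_n; arc : rel 'I_n }.

Definition mixed_wf n (G : mixed_graph n) : Prop :=
  (forall u, ~~ und G u u) /\ (forall u v, und G u v = und G v u) /\
  (forall u, ~~ arc G u u) /\ (forall u v, arc G u v -> ~~ arc G v u) /\
  (forall u v, und G u v -> ~~ arc G u v).

Definition uadj n (G : mixed_graph n) : rel 'I_n :=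
  fun u v => [|| und G u v, arc G u v | arc G v u].

Definition mconnected n (G : mixed_graph n) : Prop :=
  forall u v : 'I_n, connect (uadj G) u v.

Definition omega : algC := (1 + 'i * sqrtC 3) / 2.

Definition Nmx n (G : mixed_graph n) : 'M[algC]_n :=
  \matrix_(u, v) (if und G u v then 1
                  else if arc G u v then omega
                  else if arc G v u then omega^*
                  else 0).

Definition spectrum n (A : 'M[algC]_n) (s : seq algC) : Prop :=
  char_poly A = \prod_(x <- s) ('X - x%:P).

Definition cospectral n (A B : 'M[algC]_n) : Prop :=
  exists s, spectrum A s /\ spectrum B s.

(* Partitions V = U_{j in T6} V_j encoded by p : 'I_n -> 'I_6, where the
   class index k stands for omega^k (T6 = {omega^k | k < 6}); multiplication
   by omega is k |-> k+1, by conj omega is k |-> k+5, by -omega is k |-> k+4. *)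
Definition tdiff n (p : 'I_n -> 'I_6) (x y : 'I_n) : nat :=
  (p y + 6 - p x) %% 6.

Definition admissible n (G : mixed_graph n) (p : 'I_n -> 'I_6) : Prop :=
  forall x y,
    (und G x y -> tdiff p x y \in [:: 0; 1; 5]%N) /\
    (arc G x y -> tdiff p x y \in [:: 0; 5; 4]%N).

Definition switch n (G : mixed_graph n) (p : 'I_n -> 'I_6) : mixed_graph n :=
  MixedGraph
    (fun u v => [|| und G u v && (tdiff p u v == 0)%N,
                    arc G u v && (tdiff p u v == 5)%N
                  | arc G v u && (tdiff p v u == 5)%N])
    (fun u v => [|| und G u v && (tdiff p u v == 1)%N,
                    arc G u v && (tdiff p u v == 0)%N
                  | arc G v u && (tdiff p v u == 4)%N]).

Definition converse n (G : mixed_graph n) : mixed_graph n :=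
  MixedGraph (und G) (fun u v => arc G v u).

Definition mg_eq n (G H : mixed_graph n) : Prop :=
  forall u v, und G u v = und H u v /\ arc G u v = arc H u v.

(* one step: three-way switching, converse, or isomorphism (graphs are
   considered up to isomorphism) *)
Definition sw_step n (G H : mixed_graph n) : Prop :=
  (exists p, admissible G p /\ mg_eq H (switch G p)) \/
  mg_eq H (converse G) \/
  (exists s : 'S_n, forall u v,
      und H (s u) (s v) = und G u v /\ arc H (s u) (s v) = arc G u v).

Definition switching_equivalent n (G H : mixed_graph n) : Prop :=
  clos_refl_trans _ (@sw_step n) G H \/ clos_refl_trans _ (@sw_step n) H G.

(* Main.v *)
Require Import Defs.
From mathcomp Require Import all_boot all_order all_algebra all_fingroup all_field.
From mathcomp Require Import ring zify.
From Stdlib Require Import Relations.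
Set Implicit Arguments. Unset Strict Implicit. Unset Printing Implicit Defensive.
Import Order.TTheory GRing.Theory Num.Theory.
Local Open Scope ring_scope.
Lemma sqrt3_conj : (sqrtC 3 : algC)^* = sqrtC 3.
Proof. by apply/CrealP; apply: ger0_real; rewrite sqrtC_ge0 ler0n. Qed.
Lemma gen (x y : algC) : x^* = - x -> y^* = y -> ((1 + x * y) / 2)^* = 1 - (1 + x * y) / 2.
Proof. move=> hx hy. rewrite rmorphM rmorphD rmorphM /= rmorph1 hx hy fmorphV rmorph_nat. by field. Qed.
Lemma om_conj : omega^* = 1 - omega.
Proof. apply: gen; [exact: conjCi | exact: sqrt3_conj]. Qed.
Lemma om2_gen (x y : algC) : x * x = -1 -> y * y = 3 ->
  ((1 + x * y) / 2) ^+ 2 = (1 + x * y) / 2 - 1.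
Proof.
move=> hi hs.
have -> : ((1 + x * y) / 2) ^+ 2 = (1 + 2 * x * y + (x * x) * (y * y)) / 4 :> algC.
  by field.
by rewrite hi hs; field.
Qed.
Lemma om2 : omega ^+ 2 = omega - 1.
Proof.
apply: om2_gen; first by rewrite -expr2 sqrCi.
by rewrite -expr2 sqrtCK.
Qed.
Lemma om3 : omega ^+ 3 = -1.
Proof. by rewrite exprS om2 mulrBr -expr2 om2 mulr1; ring. Qed.
Lemma om_neq c : c ^+ 2 - c + 1 != 0 -> omega != c.
Proof. apply: contra => /eqP <-; rewrite om2; apply/eqP; ring. Qed.
Lemma om_prim : 6.-primitive_root omega.
Proof.
apply/andP; split => //; apply/forallP => i; rewrite unity_rootE.
have e4 : omega ^+ 4 = - omega by rewrite (exprD _ 3 1) om3 mulN1r.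
have e5 : omega ^+ 5 = 1 - omega by rewrite (exprD _ 3 2) om3 om2 mulN1r opprB.
case: i => [[|[|[|[|[|[|//]]]]]] ?] /=.
- rewrite expr1; apply/eqP/negbTE/om_neq; apply/eqP.
  have -> : (1 ^+ 2 - 1 + 1 : algC) = 1%:R by ring. by apply/eqP; rewrite ?pnatr_eq0 ?oner_eq0.
- rewrite om2 subr_eq; apply/eqP/negbTE/om_neq; apply/eqP.
  have -> : ((1 + 1) ^+ 2 - (1 + 1) + 1 : algC) = 3%:R by ring. by apply/eqP; rewrite ?pnatr_eq0 ?oner_eq0.
- rewrite om3; apply/eqP/negbTE/eqP => h.
  have : (2%:R : algC) = 0 by rewrite -[RHS](subrr 1) -[X in 1 - X]h; ring.
  by apply/eqP; rewrite pnatr_eq0.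
- rewrite e4; apply/eqP/negbTE/eqP => h.
  have : omega = -1 by rewrite -h opprK.
  apply/eqP/om_neq; apply/eqP.
  have -> : ((-1) ^+ 2 - (-1) + 1 : algC) = 3%:R by ring. by apply/eqP; rewrite ?pnatr_eq0 ?oner_eq0.
- rewrite e5; apply/eqP/negbTE/eqP => h.
  have : omega = 0 by rewrite [LHS](_ : _ = 1 - (1 - omega)); [rewrite h subrr| ring].
  apply/eqP/om_neq; apply/eqP.
  have -> : (0 ^+ 2 - 0 + 1 : algC) = 1%:R by ring. by apply/eqP; rewrite ?pnatr_eq0 ?oner_eq0.
- by rewrite (exprD _ 3 3) om3 mulN1r opprK !eqxx.
Qed.
Lemma om_expE i j : (omega ^+ i == omega ^+ j) = (i == j %[mod 6]).
Proof. exact: (eq_prim_root_expr om_prim). Qed.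
Lemma det3 (R : comNzRingType) (a : nat -> nat -> R) :
  \det (\matrix_(i < 3, j < 3) a i j) =
  a 0 0 * (a 1 1 * a 2 2 - a 1 2 * a 2 1)
  - a 0 1 * (a 1 0 * a 2 2 - a 1 2 * a 2 0)
  + a 0 2 * (a 1 0 * a 2 1 - a 1 1 * a 2 0).
Proof.
rewrite (expand_det_row _ 0) !big_ord_recl big_ord0 /cofactor.
rewrite !(expand_det_row _ 0) !big_ord_recl !big_ord0 /cofactor !det_mx11 !mxE /=.
rewrite /bump /=.
ring.
Qed.
Lemma minor3 (F : fieldType) n (A : 'M[F]_n) (r c : nat -> 'I_n) :
  (\rank A <= 2)%N -> \det (\matrix_(i < 3, j < 3) A (r i) (c j)) = 0.
Proof.
move=> hr.
have -> : \matrix_(i < 3, j < 3) A (r i) (c j) =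
   (\matrix_(i < 3, k < n) (k == r i)%:R) *m A *m (\matrix_(k < n, j < 3) (k == c j)%:R).
  apply/matrixP => i j; rewrite !mxE (bigD1 (c j)) //= big1 ?addr0; last first.
    by move=> k /negbTE hk; rewrite mxE hk mulr0.
  rewrite mxE eqxx mulr1 mxE (bigD1 (r i)) //= big1 ?addr0; last first.
    by move=> k /negbTE hk; rewrite mxE hk mul0r.
  by rewrite mxE eqxx mul1r.
apply/eqP; apply: contraTT hr => h.
have hu : (\matrix_(i < 3, k < n) (k == r i)%:R) *m A *m (\matrix_(k < n, j < 3) (k == c j)%:R) \in unitmx.
  by rewrite unitmxE unitfE.
have := mxrank_unit hu; rewrite -ltnNge => <-.
by apply: leq_trans (mxrankM_maxl _ _) _; apply: mxrankM_maxr.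
Qed.

Lemma prodXsubC_perm (F : idomainType) (s t : seq F) :
  \prod_(x <- s) ('X - x%:P) = \prod_(x <- t) ('X - x%:P) -> perm_eq s t.
Proof.
elim: s t => [|x s IH] t.
  rewrite big_nil => /(congr1 (fun p : {poly F} => size p)) /=; rewrite size_poly1 size_prod_XsubC.
  by case: t.
rewrite big_cons => h.
have xt : x \in t.
  by rewrite -root_prod_XsubC -h rootM root_XsubC eqxx.
have ht := perm_to_rem xt.
move: h; rewrite (perm_big _ ht) big_cons => /(mulfI (negbT (polyXsubC_eq0 x))) /IH hs.
by rewrite perm_sym (perm_trans ht) // perm_cons perm_sym.
Qed.

Lemma char_poly_similar (F : fieldType) n (P D : 'M[F]_n) : P \in unitmx ->
  char_poly (invmx P *m D *m P) = char_poly D.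
Proof.
move=> Pu; rewrite /char_poly /char_poly_mx.
set Pp := map_mx polyC P.
have Ppu : Pp \in unitmx by rewrite map_unitmx.
have -> : map_mx polyC (invmx P *m D *m P) = invmx Pp *m map_mx polyC D *m Pp.
  by rewrite !map_mxM map_invmx.
have eX : ('X%:M : 'M_n) = invmx Pp *m 'X%:M *m Pp.
  by rewrite mul_mx_scalar -scalemxAl mulVmx // scalemx1.
rewrite {1}eX -mulmxBl -mulmxBr !det_mulmx mulrC mulrA -det_mulmx mulmxV // det1 mul1r.
by [].
Qed.

Lemma char_poly_diag (F : fieldType) n (d : 'rV[F]_n) :
  char_poly (diag_mx d) = \prod_(x <- [seq d 0 i | i <- enum 'I_n]) ('X - x%:P).
Proof.
rewrite char_poly_trig ?diag_mx_is_trig // big_map big_enum /=.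
by apply: eq_bigr => i _; rewrite mxE eqxx mulr1n.
Qed.

Lemma rank_diag (F : fieldType) n (d : 'rV[F]_n) :
  \rank (diag_mx d) = #|[pred i | d 0 i != 0]|.
Proof.
have eqS : (diag_mx d :=: \sum_(i | d 0 i != 0) <<delta_mx 0 i : 'rV[F]_n>>)%MS.
  apply/eqmxP/andP; split.
    apply/row_subP => i; rewrite row_diag_mx.
    have [->|nz] := eqVneq (d 0 i) 0; first by rewrite scale0r sub0mx.
    by rewrite scalemx_sub // (sumsmx_sup i) // genmxE.
  apply/sumsmx_subP => i nz; rewrite genmxE.
  have -> : (delta_mx 0 i : 'rV[F]_n) = (d 0 i)^-1 *: row i (diag_mx d).
    by rewrite row_diag_mx scalerA mulVf // scale1r.
  by rewrite scalemx_sub // row_sub.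
rewrite eqS (mxdirectP (mxdirect_delta _ (in2W (@inj_id _)))) /=.
rewrite -sum1_card; apply: eq_bigr => i _.
by rewrite mxrank_gen mxrank_delta.
Qed.
Lemma card_count n (P : pred 'I_n) : #|P| = count P (enum 'I_n).
Proof. by rewrite cardE /enum_mem size_filter filter_predT. Qed.

Lemma rank_spectrum n (A : 'M[algC]_n) s : A \is normalmx ->
  char_poly A = \prod_(x <- s) ('X - x%:P) -> \rank A = count (fun x => x != 0) s.
Proof.
move=> /orthomx_spectralP eA hs.
have Pu := spectral_unit A.
have hc : char_poly A = char_poly (diag_mx (spectral_diag A)).
  by rewrite {1}eA char_poly_similar.
move: hs; rewrite hc char_poly_diag => /prodXsubC_perm /seq.permP <-.
rewrite [in LHS]eA mxrankMfree ?row_free_unit // (eqmxMfull _ _) ?row_full_unit ?unitmx_inv //.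
by rewrite rank_diag card_count !count_map.
Qed.

Definition ex n (G : mixed_graph n) (u v : 'I_n) : nat :=
  if und G u v then 0 else if Defs.arc G u v then 1 else 5.

Lemma om5 : omega ^+ 5 = omega^*.
Proof. by rewrite om_conj (exprD _ 3 2) om3 om2 mulN1r opprB. Qed.

Lemma om_neq0 k : omega ^+ k != 0.
Proof.
apply: expf_neq0; apply: om_neq; apply/eqP.
have -> : (0 ^+ 2 - 0 + 1 : algC) = 1%:R by ring. by apply/eqP; rewrite oner_eq0.
Qed.

Lemma NmxE n (G : mixed_graph n) u v :
  Nmx G u v = if uadj G u v then omega ^+ ex G u v else 0.
Proof.
rewrite mxE /uadj /ex; case: (und G u v) => //=; case: (Defs.arc G u v) => //=.
by case: (Defs.arc G v u) => //=; rewrite om5.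
Qed.

Lemma uadj_sym n (G : mixed_graph n) : mixed_wf G -> forall u v, uadj G u v = uadj G v u.
Proof.
move=> [h1 [h2 [h3 [h4 h5]]]] u v; rewrite /uadj h2; congr orb; exact: orbC.
Qed.

Lemma uadj_irr n (G : mixed_graph n) : mixed_wf G -> forall u, uadj G u u = false.
Proof.
by move=> [h1 [h2 [h3 [h4 h5]]]] u; rewrite /uadj (negbTE (h1 u)) (negbTE (h3 u)).
Qed.

Lemma ex_le n (G : mixed_graph n) u v : (ex G u v <= 5)%N.
Proof. by rewrite /ex; case: (und G u v) => //; case: (Defs.arc G u v). Qed.

Lemma ex_opp n (G : mixed_graph n) : mixed_wf G -> forall u v, uadj G u v ->
  ((ex G u v + ex G v u) %% 6 = 0)%N.
Proof.
move=> [h1 [h2 [h3 [h4 h5]]]] u v; rewrite /uadj /ex (h2 v u).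
case: (und G u v) => //=.
case huv: (Defs.arc G u v) => /=.
  by have := h4 _ _ huv => /negbTE ->.
by move=> ->.
Qed.

Lemma om_sum_ne0 k k' : ((k + k') %% 6 = 0)%N -> omega ^+ k + omega ^+ k' != 0.
Proof.
move=> hk; apply/negP => /eqP h.
have h1 : omega ^+ (k + k') = 1.
  by apply/eqP; rewrite -(expr0 omega) om_expE hk.
have e : omega ^+ k' = - omega ^+ k by apply/eqP; rewrite -addr_eq0 addrC h.
move: h1; rewrite exprD e mulrN => /eqP; rewrite eqr_oppLR => /eqP h2.
have : omega ^+ (k + k) = omega ^+ 3 by rewrite exprD h2 om3.
move/eqP; rewrite om_expE => /eqP; lia.
Qed.

Lemma minor3E (F : fieldType) n (A : 'M[F]_n) (r c : nat -> 'I_n) :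
  (\rank A <= 2)%N ->
  A (r 0%N) (c 0%N) * (A (r 1%N) (c 1%N) * A (r 2%N) (c 2%N) - A (r 1%N) (c 2%N) * A (r 2%N) (c 1%N))
  - A (r 0%N) (c 1%N) * (A (r 1%N) (c 0%N) * A (r 2%N) (c 2%N) - A (r 1%N) (c 2%N) * A (r 2%N) (c 0%N))
  + A (r 0%N) (c 2%N) * (A (r 1%N) (c 0%N) * A (r 2%N) (c 1%N) - A (r 1%N) (c 1%N) * A (r 2%N) (c 0%N)) = 0.
Proof.
move=> hr; rewrite -(det3 (fun i j => A (r i) (c j))); exact: minor3.
Qed.

Lemma no_triangle n (G : mixed_graph n) : mixed_wf G -> (\rank (Nmx G) <= 2)%N ->
  forall u v w, uadj G u v -> uadj G v w -> uadj G w u -> False.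
Proof.
move=> wf hr u v w huv hvw hwu.
have hvu : uadj G v u by rewrite (uadj_sym wf).
have hwv : uadj G w v by rewrite (uadj_sym wf).
have huw : uadj G u w by rewrite (uadj_sym wf).
have := minor3E (fun i => nth u [:: u; v; w] i) (fun i => nth u [:: u; v; w] i) hr.
rewrite /= !NmxE !(uadj_irr wf) huv hvw hwu hvu hwv huw => h.
have h' : omega ^+ (ex G u v + ex G v w + ex G w u) + omega ^+ (ex G u w + ex G w v + ex G v u) = 0.
  by rewrite !exprD -[RHS]h; ring.
move: h'; apply/eqP; apply: om_sum_ne0.
have := ex_opp wf huv; have := ex_opp wf hvw; have := ex_opp wf hwu; lia.
Qed.

Lemma p4 n (G : mixed_graph n) : mixed_wf G -> (\rank (Nmx G) <= 2)%N ->
  forall a b c d, uadj G a b -> uadj G b c -> uadj G c d -> ~~ uadj G a c ->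
  uadj G a d /\ ((ex G a d + ex G c b) %% 6 = (ex G a b + ex G c d) %% 6)%N.
Proof.
move=> wf hr a b c d hab hbc hcd nac.
have hcb : uadj G c b by rewrite (uadj_sym wf).
have := minor3E (fun i => nth a [:: a; c; b] i) (fun i => nth a [:: b; d; c] i) hr.
rewrite /= [Nmx G a d]NmxE !NmxE !(uadj_irr wf) hab hbc hcd hcb (negbTE nac).
case had: (uadj G a d) => h.
  split => //.
  have h' : omega ^+ ex G b c * (omega ^+ (ex G a b + ex G c d) - omega ^+ (ex G a d + ex G c b)) = 0.
    by rewrite !exprD -[RHS]h; ring.
  move/eqP: h'; rewrite mulf_eq0 (negbTE (om_neq0 _)) /= subr_eq0 om_expE => /eqP.
  by move=> ->.
exfalso.
have h' : omega ^+ (ex G b c + ex G a b + ex G c d) = 0.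
  by rewrite !exprD -[RHS]h; ring.
by move/eqP: h'; rewrite (negbTE (om_neq0 _)).
Qed.

Definition BCB n (G : mixed_graph n) (S : {set 'I_n}) (q : 'I_n -> nat) :=
  [/\ (exists u, u \in S), (exists v, v \notin S),
      (forall u v, uadj G u v = ((u \in S) != (v \in S))) &
      (forall u v, uadj G u v -> ((ex G u v + q v) %% 6 = q u %% 6)%N)].

Lemma connected_edge n (G : mixed_graph n) : mconnected G -> (1 < n)%N ->
  exists r0 r1, uadj G r0 r1.
Proof.
move=> hc hn.
pose r0 : 'I_n := Ordinal (ltnW hn). pose v : 'I_n := Ordinal hn.
have /connectP [[|r1 p] hp hl] := hc r0 v.
  by move: hl => /(congr1 val).
by exists r0, r1; move: hp => /= /andP [].
Qed.

Lemma structure n (G : mixed_graph n) : mixed_wf G -> mconnected G ->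
  (\rank (Nmx G) <= 2)%N -> (1 < n)%N -> exists S q, BCB G S q.
Proof.
move=> wf hc hr hn.
have [r0 [r1 h01]] := connected_edge hc hn.
have h10 : uadj G r1 r0 by rewrite (uadj_sym wf).
have sym := uadj_sym wf.
pose S := [set u | uadj G u r1].
have hA : forall u, u \in S -> ~~ uadj G u r0.
  move=> u; rewrite inE => hu; apply/negP => hu0.
  by apply: (no_triangle wf hr hu h10); rewrite sym.
have hB : forall u, uadj G u r1 || uadj G u r0.
  move=> u; pose P := [pred x | uadj G x r1 || uadj G x r0].
  have cl : closed (uadj G) P.
    suff hs : forall x y, uadj G x y -> x \in P -> y \in P.
      move=> x y hxy; apply/idP/idP; first exact: hs.
      by apply: hs; rewrite sym.
    move=> x y hxy; rewrite !inE => /orP [hx|hx].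
      case hy: (uadj G y r1) => //=.
      have [] := p4 wf hr (_ : uadj G y x) hx h10 (negbT hy) => //.
      by rewrite sym.
    case hy: (uadj G y r0); first by rewrite orbT.
    have [] := p4 wf hr (_ : uadj G y x) hx h01 (negbT hy) => //.
      by rewrite sym.
    by move=> -> _.
  have := closed_connect cl (hc r0 u); rewrite !inE h01 /= => <-.
  done.
have hC : forall u v, uadj G u v = ((u \in S) != (v \in S)).
  have key : forall u v, u \in S -> v \notin S -> uadj G u v.
    move=> u v hu hv.
    have hv0 : uadj G r0 v.
      by rewrite sym; move: (hB v) hv; rewrite inE => /orP [->|].
    have hu1 : uadj G u r1 by move: hu; rewrite inE.
    by have [] := p4 wf hr hu1 h10 hv0 (hA u hu).
  move=> u v; case hu: (u \in S); case hv: (v \in S) => /=.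
  - apply/negbTE/negP => huv; move: hu hv; rewrite !inE => hu hv.
    by apply: (no_triangle wf hr huv hv); rewrite sym.
  - by apply: key => //; rewrite hv.
  - by rewrite sym; apply: key => //; rewrite hu.
  - apply/negbTE/negP => huv.
    have hu0 : uadj G u r0 by move: (hB u) hu; rewrite inE => /orP [->|].
    have hv0 : uadj G v r0 by move: (hB v) hv; rewrite inE => /orP [->|].
    by apply: (no_triangle wf hr huv hv0); rewrite sym.
pose q u := if u \in S then ex G u r1 else (ex G r0 r1 + 5 * ex G r0 u)%N.
have hD1 : forall u v, u \in S -> v \notin S -> ((ex G u v + q v) %% 6 = q u %% 6)%N.
  move=> u v hu hv; rewrite /q hu (negbTE hv).
  have hv0 : uadj G r0 v.
    by rewrite sym; move: (hB v) hv; rewrite inE => /orP [->|].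
  have hu1 : uadj G u r1 by move: hu; rewrite inE.
  have [_] := p4 wf hr hu1 h10 hv0 (hA u hu).
  lia.
exists S, q; split.
- by exists r0; rewrite inE.
- by exists r1; rewrite inE (uadj_irr wf).
- exact: hC.
move=> u v huv; move: (huv); rewrite hC.
case hu: (u \in S); case hv: (v \in S) => //= _.
  by apply: hD1; rewrite ?hv.
have := hD1 v u hv (negbT hu); have := ex_opp wf huv; lia.
Qed.

Lemma om_conjX k : (omega ^+ k)^* = omega ^+ (5 * k).
Proof. by rewrite rmorphXn /= -om5 -exprM. Qed.

Lemma Nmx_herm n (G : mixed_graph n) : mixed_wf G -> map_mx Num.Def.conjC (Nmx G)^T = Nmx G.
Proof.
move=> wf; apply/matrixP => i j; rewrite mxE.
have -> : (Nmx G)^T i j = Nmx G j i by rewrite mxE.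
rewrite !NmxE (uadj_sym wf j i).
case hij: (uadj G i j); last by rewrite rmorph0.
rewrite om_conjX; apply/eqP; rewrite om_expE.
have := ex_opp wf hij; move=> h; apply/eqP; lia.
Qed.

Lemma Nmx_normal n (G : mixed_graph n) : mixed_wf G -> Nmx G \is normalmx.
Proof. by move=> wf; apply/normalmxP; rewrite Nmx_herm. Qed.

Lemma bcb_entry n (G : mixed_graph n) S q : BCB G S q -> forall u v,
  Nmx G u v = if (u \in S) != (v \in S) then omega ^+ q u / omega ^+ q v else 0.
Proof.
move=> [_ _ hC hq] u v; rewrite NmxE hC.
case huv: ((u \in S) != (v \in S)) => //.
have hu : uadj G u v by rewrite hC.
apply: (canRL (mulfK (om_neq0 _))); rewrite -exprD; apply/eqP.
by rewrite om_expE; apply/eqP; apply: hq.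
Qed.

Lemma sqrt_nat_ne0 (k : nat) : (0 < k)%N -> sqrtC (k%:R : algC) != 0.
Proof. by move=> hk; rewrite sqrtC_eq0 pnatr_eq0 -lt0n. Qed.

Lemma sqrt_nat_sq (k : nat) : sqrtC (k%:R : algC) * sqrtC k%:R = k%:R.
Proof. by rewrite -expr2 sqrtCK. Qed.

Lemma bcb_eig n (G : mixed_graph n) S q : BCB G S q ->
  eigenvalue (Nmx G) (sqrtC #|S|%:R * sqrtC #|~:S|%:R).
Proof.
move=> hb; have hN := bcb_entry hb; case: hb => [[u0 hu0] [v0 hv0] _ _].
set sa := sqrtC #|S|%:R; set sb := sqrtC #|~:S|%:R.
set c := fun u => omega ^+ q u.
have cn0 : forall u, c u != 0 by move=> u; apply: om_neq0.
apply/eigenvalueP; exists (\row_u ((if u \in S then sb else sa) / c u)).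
  apply/rowP => v; rewrite !mxE.
  under eq_bigr => u _ do rewrite mxE hN.
  case hv: (v \in S).
    transitivity (\sum_(u in ~:S) sa / c v).
      rewrite [RHS]big_mkcond /=; apply: eq_bigr => u _; rewrite inE /c.
      case: (u \in S) => /=.
        by rewrite mulr0.
      by rewrite mulrA divfK // om_neq0.
    rewrite sumr_const -mulr_natr -(sqrt_nat_sq #|~:S|) /sa /sb; ring.
  transitivity (\sum_(u in S) sb / c v).
    rewrite [RHS]big_mkcond /=; apply: eq_bigr => u _; rewrite /c.
    case: (u \in S) => /=.
      by rewrite mulrA divfK // om_neq0.
    by rewrite mulr0.
  rewrite sumr_const -mulr_natr -(sqrt_nat_sq #|S|) /sa /sb; ring.
apply/eqP => /rowP /(_ u0); rewrite !mxE hu0 => /eqP.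
rewrite mulf_eq0 invr_eq0 (negbTE (cn0 _)) orbF /sb; apply/negP/sqrt_nat_ne0.
by apply/card_gt0P; exists v0; rewrite inE.
Qed.

Lemma bcb_eig_inv n (H : mixed_graph n) S q l : BCB H S q ->
  eigenvalue (Nmx H) l -> l != 0 -> l ^+ 2 = (#|S| * #|~:S|)%:R.
Proof.
move=> hb /eigenvalueP [y hy yn0] ln0; have hN := bcb_entry hb.
set c := fun u => omega ^+ q u.
have cn0 : forall u, c u != 0 by move=> u; apply: om_neq0.
set al := \sum_(u in S) y 0 u * c u.
set be := \sum_(u in ~:S) y 0 u * c u.
have hyv : forall v, l * y 0 v * c v = if v \in S then be else al.
  move=> v; move/rowP: (hy) => /(_ v); rewrite mxE [in RHS]mxE => e.
  rewrite -e mulr_suml.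
  case hv: (v \in S).
    rewrite /be [RHS]big_mkcond /=; apply: eq_bigr => u _; rewrite hN inE hv /c.
    case: (u \in S) => /=; first by rewrite mulr0 mul0r.
    by rewrite -!mulrA mulVf ?om_neq0 // mulr1.
  rewrite /al [RHS]big_mkcond /=; apply: eq_bigr => u _; rewrite hN hv /c.
  case: (u \in S) => /=; last by rewrite mulr0 mul0r.
  by rewrite -!mulrA mulVf ?om_neq0 // mulr1.
have hal : l * al = #|S|%:R * be.
  rewrite /al mulr_sumr (eq_bigr (fun _ => be)); first by rewrite sumr_const mulr_natl.
  by move=> v hv; rewrite mulrA hyv hv.
have hbe : l * be = #|~:S|%:R * al.
  rewrite /be mulr_sumr (eq_bigr (fun _ => al)); first by rewrite sumr_const mulr_natl.
  by move=> v; rewrite inE => hv; rewrite mulrA hyv (negbTE hv).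
apply/eqP; apply/negPn/negP => hne; apply/negP: yn0; apply/negPn/eqP.
have h0 : forall x, l ^+ 2 * x = (#|S| * #|~:S|)%:R * x -> x = 0.
  move=> x hx; apply/eqP; move: hx => /eqP; rewrite -subr_eq0 -mulrBl mulf_eq0.
  by rewrite subr_eq0 (negbTE hne).
have al0 : al = 0.
  by apply: h0; rewrite expr2 -mulrA hal mulrCA hbe natrM; ring.
have be0 : be = 0.
  by apply: h0; rewrite expr2 -mulrA hbe mulrCA hal natrM; ring.
apply/rowP => v; rewrite mxE.
have := hyv v; rewrite al0 be0 if_same => /eqP.
rewrite !mulf_eq0 (negbTE ln0) (negbTE (cn0 v)) orbF /=.
by move/eqP.
Qed.

Definition Kmg n (S : {set 'I_n}) : mixed_graph n :=
  MixedGraph (fun u v => (u \in S) != (v \in S)) (fun _ _ => false).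

Definition ordmod (k : nat) : 'I_6 := Ordinal (ltn_pmod k (isT : (0 < 6)%N)).

Lemma step_switch n (G : mixed_graph n) S q : mixed_wf G -> BCB G S q ->
  sw_step G (Kmg S).
Proof.
move=> wf [_ _ hC hq]; have [h1 [h2 [h3 [h4 h5]]]] := wf.
pose p u := ordmod (q u).
have htd : forall x y, uadj G x y -> tdiff p x y = ((6 - ex G x y) %% 6)%N.
  move=> x y hxy; rewrite /tdiff /p /=.
  have := hq x y hxy; have := ex_le G x y; lia.
have adj_und : forall x y, und G x y -> uadj G x y by move=> x y h; rewrite /uadj h.
have adj_arc : forall x y, Defs.arc G x y -> uadj G x y by move=> x y h; rewrite /uadj h orbT.
have td_und : forall x y, und G x y -> tdiff p x y = 0%N.
  by move=> x y h; rewrite htd ?adj_und // /ex h.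
have td_arc : forall x y, Defs.arc G x y -> tdiff p x y = 5%N.
  move=> x y h; rewrite htd ?adj_arc // /ex h.
  by case hu: (und G x y) => //; have := h5 x y hu; rewrite h.
left; exists p; split.
  move=> x y; split => h; [by rewrite td_und | by rewrite td_arc].
move=> u v /=; split.
  rewrite -hC /uadj.
  case hu: (und G u v); first by rewrite td_und.
  case ha: (Defs.arc G u v); first by rewrite td_arc.
  by case hb: (Defs.arc G v u) => //=; rewrite td_arc.
case hu: (und G u v); first by rewrite td_und //= (negbTE (h5 u v hu)) /=; case hb: (Defs.arc G v u) => //; rewrite td_arc.
case ha: (Defs.arc G u v); first by rewrite td_arc //=; rewrite (negbTE (h4 u v ha)).
by case hb: (Defs.arc G v u) => //=; rewrite td_arc.
Qed.

Lemma step_back n (H : mixed_graph n) S q : mixed_wf H -> BCB H S q ->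
  sw_step (Kmg S) H.
Proof.
move=> wf [_ _ hC hq]; have [h1 [h2 [h3 [h4 h5]]]] := wf.
pose p u := ordmod (6 - q u %% 6).
have htd : forall x y, uadj H x y -> tdiff p x y = ex H x y.
  move=> x y hxy; rewrite /tdiff /p /=.
  have := hq x y hxy; have := ex_le H x y; lia.
left; exists p; split.
  move=> x y; split => /= hxy; last by [].
  have hxy' : uadj H x y by rewrite hC.
  rewrite htd //.
  by rewrite /ex; case: (und H x y) => //; case: (Defs.arc H x y).
move=> u v /=; rewrite -hC.
case hadj: (uadj H u v); last first.
  move: hadj; rewrite /uadj; case: (und H u v) => //; case: (Defs.arc H u v) => //.
rewrite /= !orbF htd // /ex.
case hu: (und H u v) => //=; first by rewrite (negbTE (h5 u v hu)).
by case ha: (Defs.arc H u v).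
Qed.

Lemma bcb_compl n (H : mixed_graph n) S q : BCB H S q -> BCB H (~: S) q.
Proof.
move=> [[u hu] [v hv] hC hq]; split => //.
- by exists v; rewrite inE.
- by exists u; rewrite inE negbK.
- by move=> x y; rewrite hC !inE; case: (x \in S); case: (y \in S).
Qed.

Lemma perm_sets n (S S' : {set 'I_n}) : #|S| = #|S'| ->
  exists s : 'S_n, forall u, (s u \in S') = (u \in S).
Proof.
move=> hc.
pose l1 := enum S ++ enum (~: S). pose l2 := enum S' ++ enum (~: S').
have sz : forall A : {set 'I_n}, size (enum A ++ enum (~: A)) = n.
  by move=> A; rewrite size_cat -!cardE cardsC card_ord.
have un : forall A : {set 'I_n}, uniq (enum A ++ enum (~: A)).
  move=> A; rewrite cat_uniq !enum_uniq /= andbT; apply/hasPn => x.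
  by rewrite !mem_enum inE.
have mem : forall (A : {set 'I_n}) x, x \in enum A ++ enum (~: A).
  by move=> A x; rewrite mem_cat !mem_enum inE; case: (x \in A).
have s1 : size l1 = n := sz S.
have s2 : size l2 = n := sz S'.
have m1 : forall x, x \in l1 := mem S.
have ul2 : uniq l2 := un S'.
have e12 : size l1 = size l2 by rewrite s1 s2.
pose f u := nth u l2 (index u l1).
have f_inj : injective f.
  move=> u v; rewrite /f => e.
  have iu : (index u l1 < size l2)%N by rewrite -e12 index_mem.
  have iv : (index v l1 < size l2)%N by rewrite -e12 index_mem.
  have e' : nth u l2 (index u l1) = nth u l2 (index v l1).
    by rewrite e (set_nth_default u v iv).
  move/eqP: e'; rewrite nth_uniq // => /eqP ei.
  have iv1 : (index v l1 < size l1)%N by rewrite index_mem.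
  by have := congr1 (nth u l1) ei; rewrite nth_index // (set_nth_default v u iv1) nth_index.
exists (perm f_inj) => u; rewrite permE /f /l1 /l2 index_cat nth_cat mem_enum.
rewrite -!cardE -hc.
case hu: (u \in S).
  have hi : (index u (enum S) < #|S|)%N by rewrite cardE index_mem mem_enum hu.
  by rewrite hi -mem_enum mem_nth // -cardE -hc.
rewrite ltnNge leq_addr /= addKn.
have hi : (index u (enum (~: S)) < #|~: S'|)%N.
  have cc : #|~: S'| = #|~: S| by apply/eqP; rewrite -(eqn_add2l #|S|) {1}hc !cardsC.
  by rewrite cc cardE index_mem mem_enum inE hu.
have : nth u (enum (~: S')) (index u (enum (~: S))) \in ~: S'.
  by rewrite -mem_enum mem_nth // -cardE.
by rewrite inE => /negbTE ->.
Qed.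

Lemma step_iso n (S S' : {set 'I_n}) : #|S| = #|S'| -> sw_step (Kmg S) (Kmg S').
Proof.
move=> hc; have [s hs] := perm_sets hc.
by right; right; exists s => u v /=; rewrite !hs.
Qed.

Theorem theorem5p10 (n : nat) (G : mixed_graph n) :
  mixed_wf G -> mconnected G -> \rank (Nmx G) = 2%N ->
  forall H : mixed_graph n, mixed_wf H -> mconnected H ->
    cospectral (Nmx G) (Nmx H) -> switching_equivalent G H.
Proof.
move=> wfG cG rG H wfH cH [s [hsG hsH]].
have n2 : (1 < n)%N by have := rank_leq_row (Nmx G); rewrite rG.
have rG2 : (\rank (Nmx G) <= 2)%N by rewrite rG.
have rH : \rank (Nmx H) = 2%N.
  by rewrite (rank_spectrum (Nmx_normal wfH) hsH) -(rank_spectrum (Nmx_normal wfG) hsG).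
have [S [q bG]] := structure wfG cG rG2 n2.
have [S' [q' bH]] := structure wfH cH (eq_leq rH) n2.
pose l : algC := sqrtC #|S|%:R * sqrtC #|~:S|%:R.
have eH : eigenvalue (Nmx H) l.
  by rewrite eigenvalue_root_char hsH -hsG -eigenvalue_root_char; apply: bcb_eig bG.
have ln0 : l != 0.
  case: bG => [[u hu] [v hv] _ _].
  rewrite mulf_neq0 // sqrt_nat_ne0 //; apply/card_gt0P; [by exists u | by exists v; rewrite inE].
have hl := bcb_eig_inv bH eH ln0.
have hl2 : l ^+ 2 = (#|S| * #|~:S|)%:R by rewrite exprMn !sqrtCK natrM.
have hab : (#|S| * #|~:S| = #|S'| * #|~:S'|)%N.
  by apply/eqP; rewrite -(eqr_nat algC) -hl hl2.
have hsum : (#|S| + #|~:S| = #|S'| + #|~:S'|)%N by rewrite !cardsC.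
have [e|e] : #|S| = #|S'| \/ #|S| = #|~:S'| by nia.
  left; apply: rt_trans (rt_step _ _ _ _ (step_switch wfG bG)) _.
  apply: rt_trans (rt_step _ _ _ _ (step_iso e)) _.
  exact: rt_step (step_back wfH bH).
left; apply: rt_trans (rt_step _ _ _ _ (step_switch wfG bG)) _.
apply: rt_trans (rt_step _ _ _ _ (step_iso e)) _.
exact: rt_step (step_back wfH (bcb_compl bH)).
Qed.
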